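(* Fix $\delta\in(0,1]$. If a random variable $\xi\ge0$ has a heavy-tailed distribution, then there exists a function $h:\mathbf R^+\to\mathbf R^+$ such that: (i) $h$ is subadditive, i.e. $h(x)\le h(y)+h(x-y)$ for all $0\le y\le x$; (ii) $h(x)=o(x)$ as $x\to\infty$; (iii) $\mathbf E e^{h(\xi)}\le 1+\delta$; (iv) $\mathbf E\,\xi e^{h(\xi)}=\infty$.
   Context: A distribution $F$ on $[0,\infty)$ is heavy-tailed if $\int_0^\infty e^{\gamma x}F(dx)=\infty$ for every $\gamma>0$. *)

(* Defs.v *)
From HB Require Import structures.
From mathcomp Require Import all_boot all_order all_algebra.
From mathcomp Require Import all_classical all_reals all_analysis.
Set Implicit Arguments. Unset Strict Implicit. Unset Printing Implicit Defensive.
Import Order.TTheory GRing.Theory Num.Theory.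
Import numFieldNormedType.Exports.
Local Open Scope classical_set_scope.
Local Open Scope ring_scope.

Definition heavy_tailed (R : realType) (F : set R -> \bar R) : Prop :=
  forall g : R, 0 < g ->
    (\int[F]_(x in [set x : R | (0 <= x)%R]) (expR (g * x))%:E = +oo)%E.

(* Main.v *)
Require Import Defs.
From HB Require Import structures.
From mathcomp Require Import all_boot all_order all_algebra.
From mathcomp Require Import all_classical all_reals all_analysis.
From mathcomp Require Import ring lra measurable_realfun.
Set Implicit Arguments. Unset Strict Implicit. Unset Printing Implicit Defensive.
Import Order.TTheory GRing.Theory Num.Theory.
Import numFieldNormedType.Exports.
Import Num.Def.
Local Open Scope classical_set_scope.
Local Open Scope ring_scope.

(* Proof strategy: h is the infimum of a family of lines L_k(x) = c_k + b_k (x - p_k)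
   (a concave piecewise-linear function), built block by block so that the
   contribution of each block to E[xi e^h] is at least 1 while its contribution
   to E[e^h] - 1 is at most delta / 2^(k+1). *)

Section Lines.
Context {R : realType}.
Variables (p c b : nat -> R).
Hypothesis p0 : p 0 = 0.
Hypothesis c0 : c 0 = 0.
Hypothesis pS : forall k, p k + 1 <= p k.+1.
Hypothesis cS : forall k, c k.+1 = c k + b k * (p k.+1 - p k).
Hypothesis b_gt0 : forall k, 0 < b k.
Hypothesis bS : forall k, b k.+1 <= b k.

Definition L k x := c k + b k * (x - p k).

Lemma p_nd k j : (k <= j)%N -> p k <= p j.
Proof.
move=> /subnK <-; elim: (j - k)%N => [|n IH]; first by rewrite add0n.
by rewrite addSn; apply: (le_trans IH); have := pS (n + k)%N; lra.
Qed.

Lemma b_nd k j : (k <= j)%N -> b j <= b k.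
Proof.
move=> /subnK <-; elim: (j - k)%N => [|n IH]; first by rewrite add0n.
by rewrite addSn; apply: le_trans IH.
Qed.

Lemma p_ge k : k%:R <= p k.
Proof.
elim: k => [|k IH]; first by rewrite p0.
by rewrite -natr1; have := pS k; lra.
Qed.

Lemma claimA k j x : (j <= k)%N -> p k <= x -> L k x <= L j x.
Proof.
elim: k j => [|k IH] j.
  by rewrite leqn0 => /eqP ->.
rewrite leq_eqVlt => /orP[/eqP -> //|]; rewrite ltnS => jk xp.
have pk : p k <= p k.+1 by have := pS k; lra.
apply: le_trans (IH j jk (le_trans pk xp)).
rewrite /L cS.
have h1 : 0 <= b k - b k.+1 by rewrite subr_ge0.
have h2 : 0 <= x - p k.+1 by rewrite subr_ge0.
have := mulr_ge0 h1 h2.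
nra.
Qed.

Lemma claimB k j x : (k <= j)%N -> x <= p k.+1 -> L k x <= L j x.
Proof.
move=> /subnK <-; elim: (j - k)%N => [|n IH] xp; first by rewrite add0n.
apply: (le_trans (IH xp)); rewrite addSn /L cS.
have xp' : x <= p (n + k).+1 by apply: (le_trans xp); apply: p_nd; rewrite ltnS leq_addl.
have h1 : 0 <= b (n + k) - b (n + k).+1 by rewrite subr_ge0.
have h2 : 0 <= p (n + k).+1 - x by rewrite subr_ge0.
have := mulr_ge0 h1 h2.
nra.
Qed.

Lemma L0_ge0 k : 0 <= L k 0.
Proof.
have := @claimB 0 k 0 (leq0n k); rewrite /L p0 c0 subrr mulr0 addr0 => -> //.
by have := pS 0; rewrite p0; lra.
Qed.

Lemma L_nd k x y : x <= y -> L k x <= L k y.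
Proof. by move=> xy; rewrite /L lerD2l; apply: ler_wpM2l; [exact: ltW | rewrite lerD2r]. Qed.

Lemma L_ge0 k x : 0 <= x -> 0 <= L k x.
Proof. by move=> x0; apply: le_trans (L0_ge0 k) (L_nd k x0). Qed.

Definition h x := inf (range (fun k => L k (maxr x 0))).

Lemma h_lb x : has_lbound (range (fun k => L k (maxr x 0))).
Proof. by exists 0 => _ [k _ <-]; apply: L_ge0; rewrite le_max lexx orbT. Qed.

Lemma h_ne x : range (fun k => L k (maxr x 0)) !=set0.
Proof. by exists (L 0 (maxr x 0)), 0%N. Qed.

Lemma h_le k x : 0 <= x -> h x <= L k x.
Proof.
move=> x0; have := ge_inf (h_lb x); rewrite /h => /(_ (L k (maxr x 0))).
by rewrite (max_l x0); apply; exists k.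
Qed.

Lemma h_geL k x : 0 <= x -> (forall j, L k x <= L j x) -> L k x <= h x.
Proof.
move=> x0 H; apply: lb_le_inf; first exact: h_ne.
by move=> _ [j _ <-]; rewrite (max_l x0).
Qed.

Lemma h_block k x : p k <= x <= p k.+1 -> h x = L k x.
Proof.
move=> /andP[xk xk1].
have x0 : 0 <= x by apply: le_trans xk; apply: le_trans (p_ge k).
apply/eqP; rewrite eq_le h_le //= h_geL // => j.
case: (leqP j k) => jk; first exact: claimA.
by apply: claimB => //; exact: ltnW.
Qed.

Lemma h_ge0 x : 0 <= h x.
Proof.
apply: lb_le_inf; first exact: h_ne.
by move=> _ [k _ <-]; apply: L_ge0; rewrite le_max lexx orbT.
Qed.

Lemma h_nd : {homo h : x y / x <= y}.
Proof.
move=> x y xy; apply: lb_le_inf; first exact: h_ne.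
move=> _ [k _ <-]; apply: le_trans (L_nd k (_ : maxr x 0 <= maxr y 0)).
  have := ge_inf (h_lb x); rewrite /h; apply; by exists k.
by rewrite ge_max !le_max xy lexx /= ?orbT.
Qed.

Lemma h0 : h 0 = 0.
Proof.
rewrite (@h_block 0 0) /L ?c0 ?p0 ?subrr ?mulr0 ?addr0 // lexx /=.
by have := pS 0; rewrite p0; lra.
Qed.

Lemma h_sub x y : 0 <= y -> y <= x -> h x <= h y + h (x - y).
Proof.
move=> y0 yx; have xy0 : 0 <= x - y by rewrite subr_ge0.
rewrite -lerBlDr; apply: lb_le_inf; first exact: h_ne.
move=> _ [n _ <-]; rewrite (max_l y0) lerBlDr addrC -lerBlDr.
apply: lb_le_inf; first exact: h_ne.
move=> _ [m _ <-]; rewrite (max_l xy0) lerBlDr.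
have hL : forall j, h x <= L j x by move=> j; apply: h_le; exact: le_trans yx.
case: (leqP m n) => mn.
  apply: le_trans (hL n) _.
  have := b_nd mn; have := L0_ge0 m; move: (b_gt0 n) (b_gt0 m); rewrite /L.
  nra.
apply: le_trans (hL m) _.
have := b_nd (ltnW mn); have := L0_ge0 n; move: (b_gt0 n) (b_gt0 m); rewrite /L.
nra.
Qed.


Definition cl k x := minr (maxr x (p k)) (p k.+1).
Definition phi k s := (s - p k) * expR (L k s).

Lemma pk_le k : p k <= p k.+1.
Proof. by have := pS k; lra. Qed.

Lemma stepU k x : 0 <= x ->
  expR (h (minr x (p k.+1))) <= expR (h (minr x (p k))) + b k * phi k (cl k x).
Proof.
move=> x0; have pkk := pk_le k; case: (leP x (p k)) => xk.
  rewrite !min_l ?(le_trans xk) // /cl (max_r xk) (min_l pkk) /phi subrr mul0r.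
  by rewrite mulr0 addr0.
rewrite ?(min_r (ltW xk)) /cl ?(max_l (ltW xk)).
set t := minr x (p k.+1).
have tk : p k <= t by rewrite /t le_min (ltW xk) pkk.
have tk1 : t <= p k.+1 by rewrite /t ge_min lexx orbT.
rewrite (@h_block k t) ?tk ?tk1 // (@h_block k (p k)) ?lexx ?pkk //.
have E1 := expR_ge1Dx (L k (p k) - L k t).
have E2 : expR (L k (p k)) = expR (L k t) * expR (L k (p k) - L k t).
  by rewrite -expRD addrC subrK.
rewrite E2 /phi.
have A0 := expR_gt0 (L k t).
move: E1 A0; set B := expR (L k (p k) - L k t); set A := expR (L k t).
rewrite /L subrr mulr0 addr0 => E1 A0.
have H : 0 <= B - (1 + (c k - (c k + b k * (t - p k)))) by rewrite subr_ge0.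
have := mulr_ge0 (ltW A0) H.
nra.
Qed.

Lemma sum_cl N x : 0 <= x -> \sum_(k < N) (cl k x - p k) = minr x (p N).
Proof.
move=> x0; elim: N => [|N IH]; first by rewrite big_ord0 p0 min_r.
rewrite big_ord_recr /= IH /cl; have pkk := pk_le N.
case: (leP x (p N)) => xk.
  by rewrite ?(min_l xk) ?(max_r xk) (min_l pkk) subrr addr0 min_l // (le_trans xk).
by rewrite ?(min_r (ltW xk)) ?(max_l (ltW xk)) addrC subrK.
Qed.

Lemma phi_le k x : 0 <= x -> phi k (cl k x) <= (cl k x - p k) * expR (h x).
Proof.
move=> x0; have pkk := pk_le k; rewrite /phi /cl; case: (leP x (p k)) => xk.
  by rewrite ?(max_r xk) (min_l pkk) subrr !mul0r.
rewrite ?(max_l (ltW xk)); set t := minr x (p k.+1).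
have tk : p k <= t by rewrite /t le_min (ltW xk) pkk.
have tk1 : t <= p k.+1 by rewrite /t ge_min lexx orbT.
rewrite -(@h_block k t) ?tk ?tk1 //; apply: ler_wpM2l; first by rewrite subr_ge0.
by rewrite ler_expR; apply: h_nd; rewrite /t ge_min lexx.
Qed.

Lemma stepLo N x : 0 <= x -> \sum_(k < N) phi k (cl k x) <= x * expR (h x).
Proof.
move=> x0.
have := ler_sum (index_enum 'I_N) (P := xpredT) (fun (k : 'I_N) _ => phi_le k x0).
move/le_trans; apply.
rewrite -mulr_suml sum_cl //; apply: ler_wpM2r; first exact: ltW (expR_gt0 _).
by rewrite ge_min lexx.
Qed.

Hypothesis bub : forall k, b k <= (k.+1%:R)^-1.

Lemma h_o : (fun x => h x / x) @ +oo --> 0.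
Proof.
apply/cvgrPdist_lt => e e0.
pose K := truncn (2 / e).
have hK : b K < e / 2.
  apply: le_lt_trans (bub K) _.
  rewrite invf_plt ?posrE ?ltr0n ?divr_gt0 // invf_div; exact: truncnS_gt.
near=> x.
have xM : maxr 1 (2 * c K / e) < x by near: x; apply: nbhs_pinfty_gt; rewrite num_real.
have x1 : 1 < x by move: xM; rewrite gt_max => /andP[].
have x0 : 0 < x by lra.
have xc : 2 * c K < x * e.
  by move: xM; rewrite gt_max => /andP[_]; rewrite ltr_pdivrMr // mulrC.
rewrite sub0r normrN ger0_norm ?divr_ge0 ?h_ge0 ?(ltW x0) //.
rewrite ltr_pdivrMr //; apply: le_lt_trans (h_le K (ltW x0)) _.
have pK0 : 0 <= p K by apply: le_trans (p_ge K).
have := mulr_ge0 (ltW (b_gt0 K)) pK0.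
rewrite /L => H.
have : b K * x < e / 2 * x by rewrite ltr_pM2r.
nra.
Unshelve. all: by end_near.
Qed.


Lemma h_meas : measurable_fun setT h.
Proof. exact: measurable_realfun.nondecreasing_measurable h_nd. Qed.

Lemma cl_in k x : p k <= cl k x <= p k.+1.
Proof.
have pkk := pk_le k.
by rewrite /cl le_min ge_min lexx orbT le_max lexx orbT pkk.
Qed.

Lemma cl_nd k : {homo cl k : x y / x <= y}.
Proof. by move=> x y xy; rewrite /cl le_min2 // le_max2. Qed.

Lemma phicl_nd k : {homo (fun x => phi k (cl k x)) : x y / x <= y}.
Proof.
move=> x y xy /=; have /andP[a1 _] := cl_in k x; have /andP[a2 _] := cl_in k y.
have cxy := cl_nd k xy.
rewrite /phi; apply: ler_pM; first by rewrite subr_ge0.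
- exact: ltW (expR_gt0 _).
- by rewrite lerD2r.
- by rewrite ler_expR; apply: L_nd.
Qed.

Lemma phicl_ge0 k x : 0 <= phi k (cl k x).
Proof.
have /andP[a1 _] := cl_in k x.
by rewrite /phi mulr_ge0 // ?subr_ge0 // ltW // expR_gt0.
Qed.

Variables (d : measure_display) (T : measurableType d) (P : probability T R).
Variable (X : {RV P >-> R}).
Hypothesis X0 : forall w, 0 <= X w.
Variable delta : R.
Hypothesis delta0 : 0 < delta.

Lemma nd_measX (f : R -> R) : {homo f : x y / x <= y} ->
  measurable_fun setT (fun w => (f (X w))%:E).
Proof.
move=> fnd; apply/measurable_EFinP.
exact: measurableT_comp (measurable_realfun.nondecreasing_measurable measurableT fnd) _.
Qed.

Definition V k := (\int[P]_w (phi k (cl k (X w)))%:E)%E.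
Definition eps (k : nat) := delta / 2 ^+ k.+1.

Hypothesis V1 : forall k, (1 <= V k)%E.
Hypothesis Vb : forall k, ((b k)%:E * V k <= (eps k)%:E)%E.

Lemma eps_sum N : \sum_(k < N) eps k = delta - delta / 2 ^+ N.
Proof.
elim: N => [|N IH]; first by rewrite big_ord0 expr0 divr1 subrr.
rewrite big_ord_recr /= IH /eps exprS.
have h2 : (2 : R) ^+ N != 0 by rewrite expf_neq0.
field; exact: h2.
Qed.

Lemma eps_sum_le N : \sum_(k < N) eps k <= delta.
Proof.
rewrite eps_sum gerBl; apply: divr_ge0; first exact: ltW.
exact: exprn_ge0.
Qed.

Lemma hmin_nd N : {homo (fun x => expR (h (minr x (p N)))) : x y / x <= y}.
Proof. by move=> x y xy /=; rewrite ler_expR; apply: h_nd; rewrite le_min2. Qed.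

Lemma E_bound N :
  (\int[P]_w (expR (h (minr (X w) (p N))))%:E <= (1 + \sum_(k < N) eps k)%:E)%E.
Proof.
elim: N => [|N IH].
  rewrite big_ord0 addr0.
  under eq_integral => w _ do rewrite p0 (min_r (X0 w)) h0 expR0.
  by rewrite integral_cst //= probability_setT mul1e.
have H : (\int[P]_w (expR (h (minr (X w) (p N.+1))))%:E <= \int[P]_w ((expR (h (minr (X w) (p N))))%:E
    + (b N)%:E * (phi N (cl N (X w)))%:E))%E.
  apply: ge0_le_integral => //.
  - exact: nd_measX (hmin_nd N.+1).
  - apply: emeasurable_funD; first exact: nd_measX (hmin_nd N).
    apply: measurable_funeM; exact: nd_measX (@phicl_nd N).
  - move=> w _ /=; rewrite -EFinM -EFinD lee_fin; exact: stepU.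
apply: (le_trans H).
have m1 := nd_measX (hmin_nd N).
have m2 := nd_measX (@phicl_nd N).
have g2 : forall w, (0 <= (phi N (cl N (X w)))%:E)%E.
  by move=> w; rewrite lee_fin phicl_ge0.
rewrite ge0_integralD //; try by move=> w _; apply: mule_ge0 => //; rewrite lee_fin ltW.
rewrite ge0_integralZl //; last by rewrite lee_fin ltW.
rewrite big_ord_recr /= addrA EFinD.
apply: leeD => //; exact: Vb.
exact: measurable_funeM.
Qed.


Lemma E_total : (\int[P]_w (expR (h (X w)))%:E <= (1 + delta)%:E)%E.
Proof.
pose g n w := (expR (h (minr (X w) (p n))))%:E.
have lim_g w : limn (g ^~ w) = (expR (h (X w)))%:E.
  apply/cvg_lim => //; apply: cvg_near_cst.
  near=> n.
  have hn : ((truncn (X w)).+1 <= n)%N by near: n; exists (truncn (X w)).+1.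
  rewrite /g min_l //.
  apply: le_trans (ltW (truncnS_gt _)) _; apply: le_trans (p_ge n); rewrite ler_nat.
  exact: hn.
have -> : (\int[P]_w (expR (h (X w)))%:E = \int[P]_w limn (g ^~ w))%E.
  by apply: eq_integral => w _; rewrite lim_g.
rewrite monotone_convergence //.
- apply: lime_le.
    apply: ereal_nondecreasing_is_cvgn => m n mn; apply: ge0_le_integral => //.
    + by move=> w _; rewrite lee_fin ltW // expR_gt0.
    + exact: nd_measX (hmin_nd m).
    + exact: nd_measX (hmin_nd n).
    + move=> w _; rewrite lee_fin ler_expR; apply: h_nd; rewrite le_min2 //.
      exact: p_nd.
  apply: nearW => n; apply: le_trans (E_bound n) _.
  by rewrite lee_fin lerD2l; exact: eps_sum_le.
- move=> n; exact: nd_measX (hmin_nd n).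
- by move=> n w _; rewrite lee_fin ltW // expR_gt0.
- move=> w _ m n mn; rewrite lee_fin ler_expR; apply: h_nd; rewrite le_min2 //.
  exact: p_nd.
Unshelve. all: by end_near.
Qed.

Lemma xexph_nd : measurable_fun setT (fun w => (X w * expR (h (X w)))%:E).
Proof.
apply/measurable_EFinP; apply: measurable_funM => //.
apply: measurableT_comp; first exact: measurable_expR.
exact: measurableT_comp h_meas _.
Qed.

Lemma E_lower : (\int[P]_w (X w * expR (h (X w)))%:E = +oo)%E.
Proof.
have H N : ((N%:R)%:E <= \int[P]_w (X w * expR (h (X w)))%:E)%E.
  have mphi k : measurable_fun setT (fun w => (phi k (cl k (X w)))%:E).
    exact: nd_measX (@phicl_nd k).
  have H1 : (\int[P]_w (\sum_(k < N) (phi k (cl k (X w)))%:E) <=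
             \int[P]_w (X w * expR (h (X w)))%:E)%E.
    apply: ge0_le_integral => //.
    - by move=> w _; apply: sume_ge0 => k _; rewrite lee_fin phicl_ge0.
    - by apply: emeasurable_sum => k; exact: mphi.
    - exact: xexph_nd.
    - by move=> w _; rewrite sumEFin lee_fin; apply: stepLo.
  apply: le_trans H1.
  rewrite ge0_integral_sum //; last by move=> k w _; rewrite lee_fin phicl_ge0.
  have -> : ((N%:R)%:E = \sum_(k < N) (1%:E : \bar R))%E.
    by rewrite sumEFin sumr_const card_ord.
  by apply: lee_sum => k _; exact: V1.
move: H; case: (\int[P]_w (X w * expR (h (X w)))%:E)%E => [r| |] // H.
  have := H (truncn r).+1; rewrite lee_fin => H'.
  by have := truncnS_gt r; rewrite ltNge H'.
by have := H 0%N.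
Qed.

End Lines.
Lemma nd_measRV (R : realType) (d : measure_display) (T : measurableType d)
  (P : probability T R) (X : {RV P >-> R}) (f : R -> R) :
  {homo f : x y / x <= y} -> measurable_fun setT (fun w => (f (X w))%:E).
Proof.
move=> fnd; apply/measurable_EFinP.
exact: measurableT_comp (measurable_realfun.nondecreasing_measurable measurableT fnd) _.
Qed.

Section Step.
Context {R : realType} (d : measure_display) (T : measurableType d).
Variables (P : probability T R) (X : {RV P >-> R}).
Hypothesis X0 : forall w, 0 <= X w.
Hypothesis heavy : forall g, 0 < g -> (\int[P]_w (expR (g * X w))%:E = +oo)%E.
Variables (p c b : R).
Hypotheses (p0 : 0 <= p) (c0 : 0 <= c) (b0 : 0 < b) (b1 : b <= 1).

Definition ph s := (s - p) * expR (c + b * (s - p)).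
Definition fq q x := ph (minr (maxr x p) q).
Definition W q := (\int[P]_w (fq q (X w))%:E)%E.

Lemma ph_nd s t : p <= s -> s <= t -> ph s <= ph t.
Proof.
move=> ps st; rewrite /ph; apply: ler_pM; first by rewrite subr_ge0.
- exact: ltW (expR_gt0 _).
- by rewrite lerD2r.
- rewrite ler_expR lerD2l; apply: ler_wpM2l; first exact: ltW.
  by rewrite lerD2r.
Qed.

Lemma ph_p : ph p = 0.
Proof. by rewrite /ph subrr mul0r. Qed.

Lemma ph_ge0 s : p <= s -> 0 <= ph s.
Proof. by move=> ps; rewrite -ph_p; apply: ph_nd. Qed.

Lemma clp q x : p <= q -> p <= minr (maxr x p) q.
Proof. by move=> pq; rewrite le_min pq le_max lexx orbT. Qed.

Lemma fq_nd q : p <= q -> {homo fq q : x y / x <= y}.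
Proof.
move=> pq x y xy; rewrite /fq; apply: ph_nd; first exact: clp.
by rewrite le_min2 // le_max2.
Qed.

Lemma fq_ge0 q x : p <= q -> 0 <= fq q x.
Proof. by move=> pq; apply: ph_ge0; exact: clp. Qed.

Lemma fq_le q x : p <= q -> fq q x <= ph q.
Proof. by move=> pq; apply: ph_nd; [exact: clp | rewrite ge_min lexx orbT]. Qed.

Lemma fq_mono q q' x : p <= q -> q <= q' -> fq q x <= fq q' x.
Proof.
by move=> pq qq; apply: ph_nd; [exact: clp | rewrite le_min2].
Qed.

Lemma fq_diff q q' x : p <= q -> q <= q' -> fq q' x <= fq q x + (ph q' - ph q).
Proof.
move=> pq qq; rewrite /fq; case: (leP (maxr x p) q) => xq.
  rewrite (min_l (le_trans xq qq)) ?(min_l xq); rewrite lerDl subr_ge0.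
  exact: ph_nd.
rewrite ?(min_r (ltW xq)) addrC subrK.
apply: ph_nd; [exact: clp (le_trans pq qq) | rewrite ge_min lexx orbT //].
Qed.

Lemma W_meas q : p <= q -> measurable_fun setT (fun w => (fq q (X w))%:E).
Proof. by move=> pq; apply: nd_measRV; exact: fq_nd. Qed.

Lemma W_ge0 q : p <= q -> (0 <= W q)%E.
Proof. by move=> pq; apply: integral_ge0 => w _; rewrite lee_fin fq_ge0. Qed.

Lemma W_le q : p <= q -> (W q <= (ph q)%:E)%E.
Proof.
move=> pq; apply: (@le_trans _ _ (\int[P]_w (cst (ph q)%:E) w)%E).
  apply: ge0_le_integral => //.
  - by move=> w _; rewrite lee_fin fq_ge0.
  - exact: W_meas.
  - by move=> w _; rewrite lee_fin fq_le.
by rewrite integral_cst //= probability_setT mule1.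
Qed.

Lemma W_fin q : p <= q -> W q = (fine (W q))%:E.
Proof.
move=> pq; rewrite fineK // ge0_fin_numE ?W_ge0 //.
by apply: le_lt_trans (W_le pq) _; rewrite ltey.
Qed.

Lemma W_mono q q' : p <= q -> q <= q' -> (W q <= W q')%E.
Proof.
move=> pq qq; apply: ge0_le_integral => //.
- by move=> w _; rewrite lee_fin fq_ge0.
- exact: W_meas.
- exact: W_meas (le_trans pq qq).
- by move=> w _; rewrite lee_fin fq_mono.
Qed.

Lemma W_diff q q' : p <= q -> q <= q' -> (W q' <= W q + (ph q' - ph q)%:E)%E.
Proof.
move=> pq qq.
have d0 : 0 <= ph q' - ph q by rewrite subr_ge0; apply: ph_nd.
apply: (@le_trans _ _ (\int[P]_w ((fq q (X w))%:E + (cst (ph q' - ph q)%:E) w))%E).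
  apply: ge0_le_integral => //.
  - by move=> w _; rewrite lee_fin fq_ge0 // (le_trans pq qq).
  - exact: W_meas (le_trans pq qq).
  - apply: emeasurable_funD; first exact: W_meas.
    exact: measurable_cst.
  - by move=> w _; rewrite /= -EFinD lee_fin fq_diff.
rewrite ge0_integralD //; try by move=> w _; rewrite lee_fin ?fq_ge0.
- by rewrite integral_cst //= probability_setT mule1.
- exact: W_meas.
Qed.

Definition Wr x := fine (W (maxr x p)).

Lemma Wr_lip x y : `|Wr x - Wr y| <= `|ph (maxr x p) - ph (maxr y p)|.
Proof.
wlog xy : x y / x <= y.
  move=> H; case: (leP x y) => [/H//|/ltW/H].
  by rewrite distrC [X in _ <= X -> _]distrC.
have pa : p <= maxr x p by rewrite le_max lexx orbT.
have ab : maxr x p <= maxr y p by rewrite le_max2.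
have := W_diff pa ab; have := W_mono pa ab.
rewrite /Wr (W_fin pa) (W_fin (le_trans pa ab)) /= !lee_fin => h1 h2.
rewrite distrC (ger0_norm (_ : 0 <= _ - _)); last by rewrite subr_ge0.
rewrite distrC (ger0_norm (_ : 0 <= _ - _)); last by rewrite subr_ge0 ph_nd.
lra.
Qed.

Lemma cph : continuous ph.
Proof.
move=> s; rewrite /ph.
apply: (@continuousM _ _ (fun s => s - p) (fun s => expR (c + b * (s - p)))).
  apply: continuousB; [exact: cvg_id | exact: cvg_cst].
apply: (continuous_comp (f := fun s => c + b * (s - p))); last exact: continuous_expR.
apply: continuousD; first exact: cvg_cst.
apply: (@continuousM _ _ (fun _ => b) (fun s => s - p)); first exact: cvg_cst.
apply: continuousB; [exact: cvg_id | exact: cvg_cst].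
Qed.

Lemma cphm : continuous (fun x => ph (maxr x p)).
Proof.
move=> x; apply: (continuous_comp (f := fun x => maxr x p)); last exact: cph.
apply: (@continuous_max _ _ (fun x => x) (fun _ => p)); [exact: cvg_id | exact: cvg_cst].
Qed.

Lemma Wr_cont : continuous Wr.
Proof.
move=> x; apply/cvgrPdist_lt => e e0.
have H := (cvgrPdist_lt _ _).1 (@cphm x) e e0.
near=> y; apply: le_lt_trans (Wr_lip x y) _; near: y; exact: H.
Unshelve. all: by end_near.
Qed.

Lemma phm_nd : {homo (fun x => ph (maxr x p)) : x y / x <= y}.
Proof.
by move=> x y xy /=; apply: ph_nd; [rewrite le_max lexx orbT // | exact: le_max2].
Qed.

Lemma ph_max_inf : (\int[P]_w (ph (maxr (X w) p))%:E = +oo)%E.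
Proof.
have hb := heavy b0.
have mf := nd_measRV X phm_nd.
have pw x : expR (b * x) <= expR (b * (p + 1)) + expR (b * p) * ph (maxr x p).
  have e1 := expR_gt0 (b * p).
  have g0 : 0 <= ph (maxr x p) by apply: ph_ge0; rewrite le_max lexx orbT.
  case: (leP x (p + 1)) => xp.
    apply: le_trans (_ : expR (b * (p + 1)) <= _).
      by rewrite ler_expR; apply: ler_wpM2l => //; exact: ltW.
    by rewrite lerDl mulr_ge0 // ltW.
  have px : p <= x by lra.
  rewrite (max_l px).
  have -> : expR (b * x) = expR (b * p) * expR (b * (x - p)).
    by rewrite -expRD; congr expR; ring.
  apply: le_trans (_ : expR (b * p) * ph x <= _); last first.
    by rewrite lerDr ltW // expR_gt0.
  apply: ler_wpM2l; first exact: ltW.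
  rewrite /ph -[X in X <= _]mul1r; apply: ler_pM.
  - exact: ler01.
  - exact: ltW (expR_gt0 _).
  - lra.
  - by rewrite ler_expR lerDr.
have H : (\int[P]_w (expR (b * X w))%:E <=
    \int[P]_w ((cst (expR (b * (p + 1)))%:E) w +
               (expR (b * p))%:E * (ph (maxr (X w) p))%:E))%E.
  apply: ge0_le_integral => //.
  - apply: (nd_measRV X (f := fun x => expR (b * x))) => x y xy; rewrite ler_expR; apply: ler_wpM2l => //.
    exact: ltW.
  - apply: emeasurable_funD; first exact: measurable_cst.
    exact: measurable_funeM.
  - by move=> w _; rewrite /= -EFinM -EFinD lee_fin.
have I0 : (0 <= \int[P]_w (ph (maxr (X w) p))%:E)%E.
  by apply: integral_ge0 => w _; rewrite lee_fin ph_ge0 // le_max lexx orbT.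
have e0 : (0 <= (expR (b * p))%:E)%E by rewrite lee_fin ltW // expR_gt0.
have phg0 : forall w, [set: T] w -> (0 <= (ph (maxr (X w) p))%:E)%E.
  by move=> w _; rewrite lee_fin ph_ge0 // le_max lexx orbT.
move: H; rewrite ge0_integralD //; try (by apply: measurable_funeM);
  try (by move=> w _; apply: mule_ge0 => //; exact: phg0);
  try (by move=> w _; rewrite lee_fin ltW // expR_gt0).
rewrite ge0_integralZl //.
rewrite integral_cst //= probability_setT mule1 hb.
move: I0; case: (\int[P]_w (ph (maxr (X w) p))%:E)%E => [r| |] //.
Qed.

Lemma W_unb : exists n : nat, (1 <= W (p + 1 + n%:R)%R)%E.
Proof.
apply: contrapT => Hc.
have H : forall n : nat, ~ (1 <= W (p + 1 + n%:R)%R)%E by move=> n Hn; apply: Hc; exists n.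
pose g n w := (fq (p + 1 + n%:R) (X w))%:E.
have pq n : p <= p + 1 + n%:R by have := ler0n R n; lra.
have lim_g w : limn (g ^~ w) = (ph (maxr (X w) p))%:E.
  apply/cvg_lim => //; apply: cvg_near_cst.
  near=> n.
  have hn : ((truncn (X w)).+1 <= n)%N by near: n; exists (truncn (X w)).+1.
  have xn : X w <= n%:R.
    apply: le_trans (ltW (truncnS_gt _)) _; rewrite ler_nat; exact: hn.
  rewrite /g /fq min_l //; rewrite ge_max; apply/andP; split; last exact: pq.
  by apply: (le_trans xn); rewrite -[X in X <= _]add0r lerD2r; exact: addr_ge0 p0 ler01.
have := ph_max_inf.
have -> : (\int[P]_w (ph (maxr (X w) p))%:E = \int[P]_w limn (g ^~ w))%E.
  by apply: eq_integral => w _; rewrite lim_g.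
rewrite monotone_convergence //.
- move=> Hoo.
  have : (limn (fun n => \int[P]_w g n w) <= 1)%E.
    apply: lime_le.
      apply: ereal_nondecreasing_is_cvgn => m n mn; apply: ge0_le_integral => //.
      + by move=> w _; rewrite lee_fin fq_ge0.
      + exact: W_meas.
      + exact: W_meas.
      + move=> w _; rewrite lee_fin fq_mono //; rewrite lerD2l ler_nat //.
    apply: nearW => n; have := H n; rewrite /g -/(W _).
    by move/negP; rewrite -ltNge => /ltW.
  by rewrite Hoo.
- move=> n; exact: W_meas.
- by move=> n w _; rewrite lee_fin fq_ge0.
- by move=> w _ m n mn; rewrite lee_fin fq_mono // lerD2l ler_nat.
Unshelve. all: by end_near.
Qed.

Lemma step : exists q, p + 1 <= q /\ (1 <= W q)%E /\ (W q <= (expR (c + 1))%:E)%E.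
Proof.
have pp1 : p <= p + 1 by lra.
have ec : 1 <= expR (c + 1).
  apply: (le_trans _ (expR_ge1Dx (c + 1))). by rewrite lerDl addr_ge0.
case: (lerP 1 (Wr (p + 1))) => h1.
  exists (p + 1); split; first exact: lexx.
  have Wp : W (p + 1) = (Wr (p + 1))%:E by rewrite /Wr (max_l pp1) -W_fin.
  split; first by rewrite Wp lee_fin.
  have ph1 : ph (p + 1) = expR (c + b) by rewrite /ph addrAC subrr add0r mul1r mulr1.
  apply: le_trans (W_le pp1) _; rewrite ph1 lee_fin ler_expR.
  by rewrite lerD2l.
have [n Hn] := W_unb.
set Q := p + 1 + n%:R in Hn.
have pQ : p + 1 <= Q by rewrite /Q; have := ler0n R n; lra.
have HQ : 1 <= Wr Q.
  by rewrite /Wr (max_l (le_trans pp1 pQ)) -lee_fin -W_fin // (le_trans pp1 pQ).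
have mm : minr (Wr (p + 1)) (Wr Q) <= 1 <= maxr (Wr (p + 1)) (Wr Q).
  by rewrite ge_min le_max (ltW h1) HQ orbT.
have [q qin Wq] := IVT pQ (continuous_subspaceT Wr_cont) mm.
move: qin; rewrite in_itv /= => /andP[q1 q2].
have pq : p <= q by apply: le_trans q1.
exists q; split => //.
have -> : W q = 1%E by rewrite (W_fin pq) -(max_l pq) -/(Wr q) Wq.
by split => //; rewrite lee_fin.
Qed.

End Step.

Lemma heavy_conv (R : realType) (d : measure_display) (T : measurableType d)
  (P : probability T R) (X : {RV P >-> R}) :
  heavy_tailed (distribution P X) ->
  forall g, 0 < g -> (\int[P]_w (expR (g * X w))%:E = +oo)%E.
Proof.
move=> HT g g0; have := HT g g0.
have mf : measurable_fun setT (fun x : R => (expR (g * x))%:E).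
  apply/measurable_EFinP; apply: measurable_realfun.nondecreasing_measurable => //.
  by move=> x y xy; rewrite ler_expR ler_wpM2l // ltW.
have mA : measurable [set x : R | 0 <= x].
  have -> : [set x : R | 0 <= x] = `[0, +oo[%classic by rewrite set_itvE.
  exact: measurable_itv.
have le1 := @ge0_subset_integral _ _ _ (distribution P X) _ _ mA measurableT _ mf
  (fun x _ => ltW (expR_gt0 (g * x)) : (0 <= (expR (g * x))%:E)%E)
  (fun x _ => I).
rewrite ge0_integral_distribution // in le1.
move=> H; rewrite H in le1.
by apply/eqP; rewrite -leye_eq.
Qed.

Unset Implicit Arguments.

Theorem lemma1 (d : measure_display) (T : measurableType d) (R : realType)
  (P : probability T R) (xi : {RV P >-> R}) (delta : R) :
  0 < delta -> delta <= 1 ->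
  (forall w, 0 <= xi w) ->
  heavy_tailed (distribution P xi) ->
  exists h : R -> R,
    measurable_fun setT h /\
    [/\ (forall x, 0 <= x -> 0 <= h x),
        (forall x y, 0 <= y -> y <= x -> h x <= h y + h (x - y)),
        (fun x => h x / x) @ +oo --> 0,
        (\int[P]_w (expR (h (xi w)))%:E <= (1 + delta)%:E)%E
      & (\int[P]_w (xi w * expR (h (xi w)))%:E = +oo)%E].
Proof.
move=> d0 d1 X0 HT.
have heavy := heavy_conv HT.
pose bb (k : nat) (c : R) := eps delta k * expR (- c - 1).
have eps_gt0 k : 0 < eps delta k by rewrite /eps divr_gt0 // exprn_gt0.
have eps_le k : eps delta k <= 1.
  rewrite /eps ler_pdivrMr ?exprn_gt0 // mul1r.
  apply: (le_trans d1); rewrite exprS -[X in X <= _]mulr1.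
  apply: ler_pM; [exact: ler01 | exact: ler01 | by rewrite ler1n |].
  by rewrite exprn_ege1 // ler1n.
have bb_gt0 k c : 0 < bb k c by rewrite /bb mulr_gt0 // expR_gt0.
have bb_le1 k c : 0 <= c -> bb k c <= 1.
  move=> c0; rewrite /bb -[X in _ <= X]mulr1.
  apply: ler_pM; [exact: ltW | exact: ltW (expR_gt0 _) | exact: eps_le |].
  have : expR (- c - 1) <= expR 0 by rewrite ler_expR; lra.
  by rewrite expR0.
have stepF : forall kpc : nat * (R * R), exists q : R,
    0 <= kpc.2.1 -> 0 <= kpc.2.2 ->
    kpc.2.1 + 1 <= q /\ (1 <= W xi kpc.2.1 kpc.2.2 (bb kpc.1 kpc.2.2) q)%E /\
    (W xi kpc.2.1 kpc.2.2 (bb kpc.1 kpc.2.2) q <= (expR (kpc.2.2 + 1))%:E)%E.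
  move=> [k [p c]] /=.
  have [p0|p0] := boolP (0 <= p); last by exists 0 => /negP.
  have [c0|c0] := boolP (0 <= c); last by exists 0 => _ /negP.
  have [q Hq] := step heavy p0 c0 (bb_gt0 k c) (bb_le1 k c c0).
  by exists q.
have [F HF] := choice stepF.
pose st := fix st (k : nat) : R * R :=
  match k with
  | 0%N => (0, 0)
  | k'.+1 => let pc := st k' in
             (F (k', pc), pc.2 + bb k' pc.2 * (F (k', pc) - pc.1))
  end.
pose p k := (st k).1.
pose c k := (st k).2.
pose b k := bb k (c k).
have p0 : p 0%N = 0 by [].
have c0 : c 0%N = 0 by [].
have cS k : c k.+1 = c k + b k * (p k.+1 - p k) by [].
have pSF k : p k.+1 = F (k, st k) by [].
have inv k : 0 <= p k /\ 0 <= c k.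
  elim: k => [|k [pk ck]]; first by rewrite p0 c0 lexx.
  have [H1 _] := HF (k, st k) pk ck.
  rewrite -/(p k) -pSF in H1.
  have bk := bb_gt0 k (c k).
  split; first by have := pk; lra.
  rewrite cS; apply: addr_ge0 => //; apply: mulr_ge0; first exact: ltW.
  by have := H1; lra.
have pS k : p k + 1 <= p k.+1.
  have [pk ck] := inv k; have [H1 _] := HF (k, st k) pk ck.
  by rewrite pSF.
have b_gt0 k : 0 < b k by apply: bb_gt0.
have c_nd k : c k <= c k.+1.
  have [pk ck] := inv k; rewrite cS lerDl; apply: mulr_ge0; first exact: ltW.
  by have := pS k; lra.
have bS k : b k.+1 <= b k.
  rewrite /b /bb; apply: ler_pM.
  - exact: ltW.
  - exact: ltW (expR_gt0 _).
  - have e2 : eps delta k.+1 = eps delta k / 2.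
      rewrite /eps (exprS _ k.+1); field.
      by rewrite expf_neq0.
    rewrite e2; have := eps_gt0 k; lra.
  - by rewrite ler_expR; have := c_nd k; lra.
have bub k : b k <= (k.+1%:R)^-1.
  have [_ ck] := inv k.
  apply: (le_trans (y := eps delta k)).
    rewrite /b /bb -[X in _ <= X]mulr1.
    apply: ler_pM; [exact: ltW | exact: ltW (expR_gt0 _) | exact: lexx |].
    have : expR (- c k - 1) <= expR 0 by rewrite ler_expR; lra.
    by rewrite expR0.
  rewrite /eps; apply: (le_trans (y := (2 ^+ k.+1)^-1)).
    rewrite ler_pdivrMr ?exprn_gt0 // mulVf ?expf_neq0 //.
  rewrite lef_pV2 ?posrE ?exprn_gt0 ?ltr0n //.
  have -> : (2 : R) ^+ k.+1 = (2 ^ k.+1)%:R by rewrite natrX.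
  by rewrite ler_nat; apply: ltnW; rewrite ltn_expl.
have VW k : V p c b xi k = W xi (p k) (c k) (b k) (p k.+1) by [].
have V1 k : (1 <= V p c b xi k)%E.
  have [pk ck] := inv k; have [_ [H2 _]] := HF (k, st k) pk ck.
  by rewrite VW pSF.
have Vb k : ((b k)%:E * V p c b xi k <= (eps delta k)%:E)%E.
  have [pk ck] := inv k; have [_ [_ H3]] := HF (k, st k) pk ck.
  rewrite VW pSF.
  have H4 : ((b k)%:E * W xi (p k) (c k) (b k) (F (k, st k)) <=
      (b k)%:E * (expR (c k + 1))%:E)%E.
    by apply: lee_wpmul2l => //; rewrite lee_fin ltW.
  apply: (le_trans H4).
  rewrite -EFinM lee_fin /b /bb -mulrA -expRD.
  by rewrite (_ : - c k - 1 + (c k + 1) = 0) ?expR0 ?mulr1 //; lra.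
exists (h p c b); split.
  exact: h_meas p0 c0 pS cS b_gt0 bS.
split.
- by move=> x _; exact: h_ge0 p0 c0 pS cS b_gt0 bS x.
- by move=> x y y0 yx; exact: (h_sub p0 c0 pS cS b_gt0 bS y0 yx).
- exact: h_o p0 c0 pS cS b_gt0 bS bub.
- have H := (E_total p0 c0 pS cS b_gt0 bS X0 d0 Vb); exact H.
- have H := (E_lower p0 c0 pS cS b_gt0 bS X0 V1); exact H.
Qed.
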